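(* Let $n\ge3$, let $\lambda_1,\dots,\lambda_{n-2}\in\mathbb{R}\setminus\{0\}$ and let $M^n_{\underline\lambda}=(\mathbb{R}^n,g_{\underline\lambda})$ with coordinates $(s,t,x_1,\dots,x_{n-2})$ and $g_{\underline\lambda}=2\,ds\,dt+\sum_{j=1}^{n-2}\lambda_jx_j^2\,ds^2+\sum_{j=1}^{n-2}dx_j^2$. Trivialize its (unique) spin structure by the global orthonormal frame $(\mathfrak a_{\bar0},\mathfrak a_0,\mathfrak a_1,\dots,\mathfrak a_{n-2})$ described in the context, so that spinor fields are smooth functions $M^n_{\underline\lambda}\to\Delta_{n,1}$. Then the space of parallel spinors of $M^n_{\underline\lambda}$ is $$\mathcal P(M_{\underline\lambda})=\{\varphi\in C^\infty(M_{\underline\lambda},\Delta_{n,1})\mid \varphi\equiv v \text{ constant with } v\in\Delta_V\},$$ where $\Delta_V=\{v\in\Delta_{n,1}\mid (e_2-e_1)\cdot v=0\}$. In particular $\dim_{\mathbb C}\mathcal P(M_{\underline\lambda})=\frac12\cdot2^{[n/2]}$.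
   Context: The global orthonormal frame is $\mathfrak a_{\bar0}=\partial_s-\frac12(\sum_j\lambda_jx_j^2+1)\partial_t$ (timelike), $\mathfrak a_0=\partial_s-\frac12(\sum_j\lambda_jx_j^2-1)\partial_t$, $\mathfrak a_j=\partial_{x_j}$ ($j=1,\dots,n-2$). $\Delta_{n,1}=\mathbb C^{2^{[n/2]}}$ is the complex spinor module of $\mathrm{Spin}(n,1)$, where the Clifford algebra is generated by an orthonormal basis $e_1,\dots,e_n$ of $\mathbb R^n$ with relations $e_ie_j+e_je_i=-2\varepsilon_j\delta_{ij}$, $\varepsilon_1=-1$, $\varepsilon_j=1$ for $j\ge2$. In the trivialization, Clifford multiplication by $\mathfrak a_{\bar0},\mathfrak a_0,\mathfrak a_j$ corresponds to the action of $e_1,e_2,e_{j+2}$ respectively; thus $e_2-e_1$ corresponds to the parallel isotropic field $V=\partial_t=\mathfrak a_0-\mathfrak a_{\bar0}$. A spinor field is parallel if $\nabla^S\varphi=0$ for the spinor derivative induced by the Levi-Civita connection. *)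

(* Defs.v *)
From HB Require Import structures.
From mathcomp Require Import all_boot all_order all_algebra.
From mathcomp Require Import all_classical all_reals all_analysis.
From mathcomp Require Import complex.

Set Implicit Arguments.
Unset Strict Implicit.
Unset Printing Implicit Defensive.

Import Order.TTheory GRing.Theory Num.Theory numFieldNormedType.Exports.
Local Open Scope ring_scope.
Local Open Scope complex_scope.

(* Points of M^n_lambda = R^n are row vectors p : 'rV[R]_n with coordinates
   (p_0, p_1, p_2, ..., p_{n-1}) = (s, t, x_1, ..., x_{n-2}).
   Indices of coordinates / frame vectors / Clifford generators are natural
   numbers (0-based):
     coordinate 0 = s, 1 = t, k+1 = x_k   (k = 1..n-2);
     frame vector 0 = a_{bar 0}, 1 = a_0, k+1 = a_k   (k = 1..n-2);
     Clifford generator E 0 = e_1, E 1 = e_2, E (k+1) = e_{k+2}. *)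

Section Geometry.
Variable R : realType.
Variable n : nat.
Variable lam : 'I_(n - 2) -> R.

Local Notation pt := 'rV[R]_n.

Definition coord_at (p : pt) (k : nat) : R :=
  if insub k is Some i then p ord0 i else 0.

Definition quadf (p : pt) : R :=
  \sum_(j < n - 2) lam j * (coord_at p j.+2) ^+ 2.

Definition gcoef (p : pt) (k l : nat) : R :=
  if (k == 0%N) && (l == 0%N) then quadf p
  else if ((k == 0%N) && (l == 1%N)) || ((k == 1%N) && (l == 0%N)) then 1
  else if (2 <= k)%N && (k == l) then 1
  else 0.

Definition gmx (p : pt) : 'M[R]_n := \matrix_(k, l) gcoef p k l.

Definition gdot (p : pt) (u w : pt) : R := (u *m gmx p *m w^T) ord0 ord0.

Definition ucoord (k : nat) : pt := \row_(i < n) (if val i == k then 1 else 0).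

Definition pder (k : nat) (h : pt -> R) (p : pt) : R := 'D_(ucoord k) h p.

Definition christoffel (m k l : 'I_n) (p : pt) : R :=
  2^-1 * \sum_(r < n)
    invmx (gmx p) m r *
      (pder k (fun q => gcoef q l r) p + pder l (fun q => gcoef q k r) p
       - pder r (fun q => gcoef q k l) p).

Definition lc_nabla (X : pt) (Y : pt -> pt) (p : pt) : pt :=
  \row_(m < n) ('D_X (fun q => Y q ord0 m) p +
    \sum_(k < n) \sum_(l < n) X ord0 k * Y p ord0 l * christoffel m k l p).

Definition frame (a : nat) (p : pt) : pt :=
  if a == 0%N then ucoord 0 - (2^-1 * (quadf p + 1)) *: ucoord 1
  else if a == 1%N then ucoord 0 - (2^-1 * (quadf p - 1)) *: ucoord 1
  else ucoord a.

Definition eps (a : nat) : R := if a == 0%N then -1 else 1.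

Definition conn_coef (X : pt) (a b : nat) (p : pt) : R :=
  gdot p (lc_nabla X (frame a) p) (frame b p).

End Geometry.

(* complex spinor module Delta_{n,1} = C^(2^[n/2]) *)
Definition spin_dim (n : nat) : nat := 2 ^ (n./2).

(* E : Clifford generators e_1..e_n acting on Delta_{n,1}:
   e_i e_j + e_j e_i = -2 eps_j delta_ij. *)
Definition clifford_rep (R : realType) (n : nat)
  (E : nat -> 'M[R[i]]_(spin_dim n)) : Prop :=
  forall a b : nat, (a < n)%N -> (b < n)%N ->
    E a *m E b + E b *m E a
    = ((-2 * eps R a * (if a == b then 1 else 0))%:C)%:M.

Definition cRe (R : realType) (z : R[i]) : R := mathcomp.real_closed.complex.Re z.
Definition cIm (R : realType) (z : R[i]) : R := mathcomp.real_closed.complex.Im z.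

Section Spinors.
Variable R : realType.
Variable n : nat.
Local Notation pt := 'rV[R]_n.
Local Notation N := (spin_dim n).
Local Notation spinor := 'cV[R[i]]_N.

Definition smoothR (h : pt -> R) : Prop :=
  forall (vs : seq pt) (p : pt),
    differentiable (foldr (fun (v : pt) (g : pt -> R) => 'D_v g) h vs) p.

Definition smooth_spinor (phi : pt -> spinor) : Prop :=
  forall r : 'I_N,
    smoothR (fun q => cRe (phi q r ord0)) /\ smoothR (fun q => cIm (phi q r ord0)).

Definition spinor_dir (X : pt) (phi : pt -> spinor) (p : pt) : spinor :=
  \col_(r < N) (('D_X (fun q => cRe (phi q r ord0)) p)%:C
              + 'i * ('D_X (fun q => cIm (phi q r ord0)) p)%:C)%C.

(* spinor derivative induced by Levi-Civita, in the frame trivialization: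
   nabla^S_X phi = X(phi) + 1/2 sum_{a<b} eps_a eps_b g(nabla_X a_a, a_b) e_a e_b phi *)
Definition spinor_nabla (lam : 'I_(n - 2) -> R) (E : nat -> 'M[R[i]]_N)
  (X : pt) (phi : pt -> spinor) (p : pt) : spinor :=
  spinor_dir X phi p +
  \sum_(a < n) \sum_(b < n | (a < b)%N)
     ((2^-1 * eps R a * eps R b * conn_coef lam X a b p)%:C)%C
       *: (E a *m E b *m phi p).

Definition parallel_spinor (lam : 'I_(n - 2) -> R) (E : nat -> 'M[R[i]]_N)
  (phi : pt -> spinor) : Prop :=
  forall (p X : pt), spinor_nabla lam E X phi p = 0.

End Spinors.

(* Main.v *)
Require Import Defs.
From HB Require Import structures.
From mathcomp Require Import all_boot all_order all_algebra.
From mathcomp Require Import all_classical all_reals all_analysis.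
From mathcomp Require Import complex.
From mathcomp Require Import ring lra zify.
Import Order.TTheory GRing.Theory Num.Theory numFieldNormedType.Exports.
Local Open Scope ring_scope.
Module MA.
Local Open Scope ring_scope.

Lemma zid (V : zmodType) (X Y : V) :
  - Y + X - (- X + Y) + (- Y - X + (- X - Y)) = - (Y *+ 4).
Proof.
rewrite !opprD !opprK addrACA.
rewrite [- Y + X + _]addrACA [X - Y + _]addrACA !subrr addr0 add0r.
by rewrite !addrA.
Qed.

Section Cliff.
Variables (R : realType) (n : nat) (E : nat -> 'M[R[i]]_(spin_dim n)).
Hypothesis hE : clifford_rep E.

Lemma cl_anti a b : (a < n)%N -> (b < n)%N -> a != b -> E a *m E b = - (E b *m E a).
Proof.
move=> ha hb hab; have := hE a b ha hb; rewrite (negPf hab) mulr0.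
rewrite rmorph0 => /eqP; rewrite addr_eq0 => /eqP.
done.
Qed.

Lemma cl_sq a : (a < n)%N -> E a *m E a = ((- eps R a)%:C%C)%:M.
Proof.
move=> ha; have := hE a a ha ha; rewrite eqxx mulr1 => h.
apply: (@scalemx_inj _ _ _ 2%:R); first by rewrite pnatr_eq0.
rewrite scaler_nat mulr2n h scale_scalar_mx; congr (_%:M).
by rewrite !rmorphM !rmorphN !rmorph_nat mulrN mulNr.
Qed.

Lemma cl_sq0 : (0 < n)%N -> E 0 *m E 0 = 1%:M.
Proof. by move=> h; rewrite cl_sq // /eps eqxx opprK. Qed.

Lemma cl_sqS a : (a < n)%N -> a != 0%N -> E a *m E a = - 1%:M.
Proof. by move=> h h'; rewrite cl_sq // /eps (negPf h') rmorphN raddfN. Qed.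

Lemma nil_A : (1 < n)%N -> (E 1 - E 0) *m (E 1 - E 0) = 0.
Proof.
move=> h1; have h0 : (0 < n)%N by apply: ltn_trans h1.
rewrite mulmxBl !mulmxBr cl_sq0 // cl_sqS // (cl_anti 0 1 h0 h1) //.
by rewrite opprB opprK addrACA !addNr addr0.
Qed.

Lemma anti_AB : (1 < n)%N ->
  (E 1 - E 0) *m (E 1 + E 0) + (E 1 + E 0) *m (E 1 - E 0) = (-4%:R : R[i]) *: 1%:M.
Proof.
move=> h1; have h0 : (0 < n)%N by apply: ltn_trans h1.
rewrite !(mulmxBl, mulmxDl, mulmxBr, mulmxDr) cl_sq0 // cl_sqS // (cl_anti 0 1 h0 h1) //.
by rewrite zid scaleNr scaler_nat.
Qed.

Lemma rank_ker : (1 < n)%N -> \rank (kermx (E 1 - E 0)^T) = (spin_dim n %/ 2)%N.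
Proof.
move=> h1.
rewrite mxrank_ker mxrank_tr.
set r := \rank (E 1 - E 0).
have le1 : (r + r - spin_dim n <= 0)%N.
  by rewrite -(mxrank0 (R[i]) (spin_dim n) (spin_dim n)) -(nil_A h1) mxrank_mul_min.
have le2 : (spin_dim n <= r + r)%N.
  have nz : (-4%:R : R[i]) != 0 by rewrite oppr_eq0 pnatr_eq0.
  rewrite -{1}(mxrank1 (R[i]) (spin_dim n)) -(mxrank_scale_nz _ nz) -(anti_AB h1).
  apply: leq_trans (mxrank_add _ _) _.
  by rewrite leq_add // ?mxrankM_maxl ?mxrankM_maxr.
have eN : spin_dim n = (r + r)%N.
  by apply/eqP; rewrite eqn_leq le2 -subn_eq0 -leqn0 le1.
by rewrite eN addnK addnn -muln2 mulnK.
Qed.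
End Cliff.

Unset Implicit Arguments.
Set Strict Implicit.
End MA.
Import MA.

Module MB.
Local Open Scope ring_scope.
Set Implicit Arguments.
Unset Strict Implicit.
Local Open Scope classical_set_scope.

Section An.
Variables (R : realType) (n : nat).
Local Notation pt := 'rV[R]_n.

Lemma Dpoly (f : pt -> R) (p v : pt) (B C : R) :
  (forall h : R, f (h *: v + p) = f p + h * B + h ^+ 2 * C) -> 'D_v f p = B.
Proof.
move=> H; rewrite /derive; apply: cvg_lim => //.
apply: (@cvg_trans _ ((fun h : R => B + h * C) @ 0^')).
  apply: near_eq_cvg; near=> h.
  have hn0 : h != 0 by near: h; exact: nbhs_dnbhs_neq.
  rewrite /= H -[_ *: _]/(_ * _). field. done.
apply: cvg_within_filter.
have h0 : (fun h : R => B + h * C) @ (nbhs (0:R)) --> B + 0 * C.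
  apply: cvgD; first exact: cvg_cst.
  apply: cvgM; [exact: cvg_id | exact: cvg_cst].
by rewrite mul0r addr0 in h0.
Unshelve. all: by end_near.
Qed.

Lemma coordD (u v : pt) k : coord_at (u + v) k = coord_at u k + coord_at v k.
Proof. by rewrite /coord_at; case: insubP => [i _ _|_]; rewrite ?mxE ?addr0. Qed.

Lemma coordZ (h : R) (v : pt) k : coord_at (h *: v) k = h * coord_at v k.
Proof. by rewrite /coord_at; case: insubP => [i _ _|_]; rewrite ?mxE ?mulr0. Qed.

Lemma coord0 k : coord_at (0 : pt) k = 0.
Proof. by rewrite /coord_at; case: insubP => [i _ _|_]; rewrite ?mxE. Qed.

Lemma coord_ucoord r k : coord_at (ucoord R n r) k = if (k < n)%N && (k == r) then 1 else 0.
Proof.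
rewrite /coord_at; case: insubP => [i -> <-|/negPf ->] //=.
by rewrite mxE.
Qed.

Lemma coord_ord (v : pt) (i : 'I_n) : coord_at v i = v ord0 i.
Proof. by rewrite /coord_at valK. Qed.

Lemma sum_delta (F : nat -> R) c :
  \sum_(r < n) (if (r : nat) == c then F r else 0) = if (c < n)%N then F c else 0.
Proof. by rewrite -big_mkcond big_ord1_eq. Qed.

Lemma coord_sum (v : pt) k : coord_at v k = \sum_(r < n) v ord0 r * coord_at (ucoord R n r) k.
Proof.
case: (ltnP k n) => hk.
  under eq_bigr => r _ do rewrite coord_ucoord hk /= eq_sym -mulrb mulr_natr mulrb -coord_ord.
  by rewrite sum_delta hk.
rewrite {1}/coord_at insubN -?ltnNge //.
by rewrite big1 // => r _; rewrite coord_ucoord ltnNge hk mulr0.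
Qed.

Variable lam : 'I_(n - 2) -> R.

Definition dq (p v : pt) : R := \sum_(j < n - 2) lam j * (2 * coord_at p j.+2 * coord_at v j.+2).

Lemma quadf_line (p v : pt) h :
  quadf lam (h *: v + p) = quadf lam p + h * dq p v + h ^+ 2 * quadf lam v.
Proof.
rewrite /quadf /dq !mulr_sumr -!big_split /=; apply: eq_bigr => j _.
rewrite coordD coordZ; ring.
Qed.


Lemma dq_sum p v : dq p v = \sum_(r < n) v ord0 r * dq p (ucoord R n r).
Proof.
rewrite /dq; under eq_bigr => j _ do rewrite (coord_sum v) !mulr_sumr.
rewrite exchange_big; apply: eq_bigr => r _; rewrite /dq mulr_sumr.
by apply: eq_bigr => j _; ring.
Qed.

Lemma dqD p u v : dq p (u + v) = dq p u + dq p v.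
Proof. by rewrite /dq -big_split /=; apply: eq_bigr => j _; rewrite coordD; ring. Qed.

Lemma dqZ p c v : dq p (c *: v) = c * dq p v.
Proof. by rewrite /dq mulr_sumr; apply: eq_bigr => j _; rewrite coordZ; ring. Qed.

Lemma dqN p v : dq p (- v) = - dq p v.
Proof. by rewrite -scaleN1r dqZ mulN1r. Qed.

Lemma dq_u01 p r : (r <= 1)%N -> dq p (ucoord R n r) = 0.
Proof.
move=> hr; rewrite /dq big1 // => j _; rewrite coord_ucoord.
case: ifP => [/andP [_ /eqP e]|_]; last by rewrite !mulr0.
by move: hr; rewrite -e.
Qed.

Lemma pder_quadf k p : pder k (quadf lam) p = dq p (ucoord R n k).
Proof.
rewrite /pder; apply: (@Dpoly _ _ _ _ (quadf lam (ucoord R n k))) => h.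
by rewrite quadf_line.
Qed.

Lemma gcoef_split q k l :
  gcoef lam q k l = if (k == 0%N) && (l == 0%N) then quadf lam q else gcoef lam 0 k l.
Proof. by rewrite /gcoef; case: ifP. Qed.

Lemma pder_gcoef k l r p :
  pder k (fun q => gcoef lam q l r) p =
  if (l == 0%N) && (r == 0%N) then dq p (ucoord R n k) else 0.
Proof.
case: ifP => h.
  rewrite -pder_quadf; congr pder; apply/funext => q.
  by rewrite gcoef_split h.
rewrite /pder; apply: (@Dpoly _ _ _ _ 0) => c.
by rewrite (gcoef_split (_ + _)) (gcoef_split p) h; ring.
Qed.

Lemma gcoef_sym p k l : gcoef lam p k l = gcoef lam p l k.
Proof.
rewrite /gcoef; case: (eqVneq k l) => [->//|nkl].
by rewrite !andbF; case: (k == 0%N); case: (l == 0%N); case: (k == 1%N); case: (l == 1%N).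
Qed.

Lemma gmx_sym p : (gmx lam p)^T = gmx lam p.
Proof. by apply/matrixP => i j; rewrite !mxE gcoef_sym. Qed.

Hypothesis hn : (2 < n)%N.

Lemma rowG p (h : nat -> R) (k : nat) : (k < n)%N ->
  \sum_(r < n) gcoef lam p k r * h r =
  if k == 0%N then quadf lam p * h 0%N + h 1%N else if k == 1%N then h 0%N else h k.
Proof.
move=> hk.
have h0 : (0 < n)%N by apply: leq_trans hn.
have h1 : (1 < n)%N by apply: leq_trans hn.
case: ifP => [/eqP ->|k0].
  have e0 := sum_delta (fun r => quadf lam p * h r) 0; rewrite h0 /= in e0.
  have e1 := sum_delta h 1; rewrite h1 /= in e1.
  rewrite -e0 -e1 -big_split /=; apply: eq_bigr => r _.
  rewrite /gcoef /=; case: (eqVneq (r : nat) 0%N) => [->|r0] /=; first by rewrite addr0.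
  case: (eqVneq (r : nat) 1%N) => [->|r1] /=; first by rewrite mul1r add0r.
  by rewrite mul0r addr0.
case: ifP => [/eqP ->|k1].
  have e0 := sum_delta h 0; rewrite h0 /= in e0.
  rewrite -e0; apply: eq_bigr => r _.
  rewrite /gcoef /=; case: (eqVneq (r : nat) 0%N) => [->|r0] /=; first by rewrite mul1r.
  by rewrite mul0r.
have ek := sum_delta h k; rewrite hk /= in ek.
rewrite -ek; apply: eq_bigr => r _.
have k2 : (2 <= k)%N by move: k0 k1; case: (k) => [|[|kk]].
rewrite /gcoef k0 k1 /= k2 /= eq_sym.
by case: ifP => _; rewrite ?mul1r ?mul0r.
Qed.


Definition ginvc p (r l : nat) : R :=
  if r == 0%N then (l == 1%N)%:R
  else if r == 1%N then (l == 0%N)%:R - quadf lam p * (l == 1%N)%:R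
  else (r == l)%:R.

Lemma G_unit p : gmx lam p \in unitmx.
Proof.
have h0 : (0 < n)%N by apply: leq_trans hn.
have h1 : (1 < n)%N by apply: leq_trans hn.
suff H : gmx lam p *m (\matrix_(r < n, l < n) ginvc p r l) = 1%:M.
  by case: (mulmx1_unit H).
apply/matrixP => k l; rewrite !mxE.
under eq_bigr => r _ do rewrite !mxE.
rewrite (rowG p (fun r => ginvc p r l)) // /ginvc /=.
have el : (k == l) = ((k : nat) == l) by [].
rewrite el.
case: ifP => [/eqP ->|k0]; first by rewrite addrC subrK eq_sym.
case: ifP => [/eqP ->|k1]; first by rewrite eq_sym.
by rewrite k0 k1.
Qed.

Lemma invG_G p : (invmx (gmx lam p))^T *m gmx lam p = 1%:M.
Proof. by rewrite trmx_inv gmx_sym mulVmx // G_unit. Qed.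


Lemma prod3 (f g h : 'I_n -> R) :
  (\sum_k f k) * (\sum_l g l) * (\sum_r h r) = \sum_r \sum_k \sum_l f k * g l * h r.
Proof.
rewrite mulr_sumr; apply: eq_bigr => r _.
rewrite big_distrl /= mulr_suml; apply: eq_bigr => k _.
rewrite mulr_sumr mulr_suml; apply: eq_bigr => l _.
by [].
Qed.

Lemma tri_sum (a b c d e : 'I_n -> R) :
  \sum_r (\sum_k \sum_l a k * b l * (e l * e r * d k + e k * e r * d l - e k * e l * d r)) * c r
  = (\sum_k a k * d k) * (\sum_l b l * e l) * (\sum_r c r * e r)
  + (\sum_k a k * e k) * (\sum_l b l * d l) * (\sum_r c r * e r)
  - (\sum_k a k * e k) * (\sum_l b l * e l) * (\sum_r c r * d r).
Proof.
rewrite !prod3 -big_split -sumrB /=; apply: eq_bigr => r _.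
rewrite mulr_suml -big_split -sumrB /=; apply: eq_bigr => k _.
rewrite mulr_suml -big_split -sumrB /=; apply: eq_bigr => l _.
ring.
Qed.

Lemma sum_e0 (v : pt) : \sum_(k < n) v ord0 k * ((k : nat) == 0%N)%:R = coord_at v 0.
Proof.
have h0 : (0 < n)%N by apply: leq_trans hn.
under eq_bigr => k _ do rewrite -coord_ord mulr_natr mulrb.
by rewrite sum_delta h0.
Qed.

Lemma Wsum (X Y w : pt) p :
  \sum_(r < n) (\sum_(k < n) \sum_(l < n) X ord0 k * Y ord0 l *
      (pder k (fun q => gcoef lam q l r) p + pder l (fun q => gcoef lam q k r) p
       - pder r (fun q => gcoef lam q k l) p)) * w ord0 r
  = dq p X * coord_at Y 0 * coord_at w 0 + coord_at X 0 * dq p Y * coord_at w 0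
    - coord_at X 0 * coord_at Y 0 * dq p w.
Proof.
pose e := fun i : 'I_n => ((i : nat) == 0%N)%:R : R.
pose d := fun i : 'I_n => dq p (ucoord R n i).
have Hp : forall k l r : 'I_n, pder k (fun q => gcoef lam q l r) p = e l * e r * d k.
  move=> k l r; rewrite pder_gcoef /e /d.
  by case: ((l : nat) == 0%N); case: ((r : nat) == 0%N); rewrite ?mul1r ?mul0r.
transitivity (\sum_r (\sum_k \sum_l X ord0 k * Y ord0 l *
   (e l * e r * d k + e k * e r * d l - e k * e l * d r)) * w ord0 r).
  apply: eq_bigr => r _; congr (_ * _); apply: eq_bigr => k _; apply: eq_bigr => l _.
  by rewrite !Hp.
rewrite (tri_sum (fun k => X ord0 k) (fun l => Y ord0 l) (fun r => w ord0 r) d e).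
by rewrite /e /d !sum_e0 -!dq_sum.
Qed.


Lemma coordN (v : pt) k : coord_at (- v) k = - coord_at v k.
Proof. by rewrite -scaleN1r coordZ mulN1r. Qed.

Lemma coordB (u v : pt) k : coord_at (u - v) k = coord_at u k - coord_at v k.
Proof. by rewrite coordD coordN. Qed.

Definition sgn (a : nat) : R := if a == 0%N then 1 else -1.

Lemma frame_lo a p : (a <= 1)%N ->
  frame lam a p = ucoord R n 0 - (2^-1 * (quadf lam p + sgn a)) *: ucoord R n 1.
Proof. by rewrite /frame /sgn; case: a => [|[|a]]. Qed.

Lemma frame_hi a p : (2 <= a)%N -> frame lam a p = ucoord R n a.
Proof. by rewrite /frame; case: a => [|[|a]]. Qed.

Lemma coord_frame0 a p : coord_at (frame lam a p) 0 = if (a <= 1)%N then 1 else 0.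
Proof.
have h0 : (0 < n)%N by apply: leq_trans hn.
case: ifP => ha.
  by rewrite frame_lo // coordB coordZ !coord_ucoord h0 /= mulr0 subr0.
rewrite frame_hi; last by rewrite ltnNge ha.
rewrite coord_ucoord; case: a ha => [|a] //= _; by rewrite andbF.
Qed.

Lemma dq_frame a p : dq p (frame lam a p) = dq p (ucoord R n a).
Proof.
case: (leqP a 1) => ha; last by rewrite frame_hi.
by rewrite frame_lo // dqD dqN dqZ !dq_u01 // mulr0 subr0.
Qed.

Lemma Dt_lo (X : pt) a p : (a <= 1)%N ->
  \row_m 'D_X (fun q => frame lam a q ord0 m) p = - (2^-1 * dq p X) *: ucoord R n 1.
Proof.
move=> ha; apply/matrixP => i m; rewrite !mxE.
have -> : (fun q => frame lam a q ord0 m) =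
   (fun q => ucoord R n 0 ord0 m - (2^-1 * (quadf lam q + sgn a)) * ucoord R n 1 ord0 m).
  by apply/funext => q; rewrite frame_lo // !mxE.
apply: (@Dpoly _ _ _ _ (- (2^-1 * quadf lam X) * ucoord R n 1 ord0 m)) => h.
rewrite quadf_line !mxE; ring.
Qed.

Lemma Dt_hi (X : pt) a p : (2 <= a)%N ->
  \row_m 'D_X (fun q => frame lam a q ord0 m) p = 0.
Proof.
move=> ha; apply/matrixP => i m; rewrite !mxE.
apply: (@Dpoly _ _ _ _ 0) => h.
by rewrite !frame_hi //; ring.
Qed.


Definition Bsum p (k l r : 'I_n) : R :=
  pder k (fun q => gcoef lam q l r) p + pder l (fun q => gcoef lam q k r) p
  - pder r (fun q => gcoef lam q k l) p.

Definition Wrow (X Y p : pt) : pt :=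
  \row_r \sum_(k < n) \sum_(l < n) X ord0 k * Y ord0 l * Bsum p k l r.

Lemma lc_split X (Y : pt -> pt) p :
  lc_nabla lam X Y p = \row_m 'D_X (fun q => Y q ord0 m) p
     + 2^-1 *: (Wrow X (Y p) p *m (invmx (gmx lam p))^T).
Proof.
apply/matrixP => i m; rewrite !mxE; congr (_ + _).
transitivity (\sum_k \sum_l \sum_r X ord0 k * Y p ord0 l *
    (2^-1 * (invmx (gmx lam p) m r * Bsum p k l r))).
  apply: eq_bigr => k _; apply: eq_bigr => l _.
  rewrite /christoffel mulr_sumr mulr_sumr; apply: eq_bigr => r _.
  by rewrite /Bsum.
symmetry; rewrite mulr_sumr.
transitivity (\sum_r \sum_k \sum_l X ord0 k * Y p ord0 l *
    (2^-1 * (invmx (gmx lam p) m r * Bsum p k l r))).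
  apply: eq_bigr => r _; rewrite !mxE mulr_suml mulr_sumr; apply: eq_bigr => k _.
  rewrite mulr_suml mulr_sumr; apply: eq_bigr => l _; ring.
rewrite exchange_big; apply: eq_bigr => k _; by rewrite exchange_big.
Qed.

Lemma gdotD p u v w : gdot lam p (u + v) w = gdot lam p u w + gdot lam p v w.
Proof. by rewrite /gdot !mulmxDl mxE. Qed.

Lemma gdotZ p c u w : gdot lam p (c *: u) w = c * gdot lam p u w.
Proof. by rewrite /gdot -!scalemxAl mxE. Qed.

Lemma gdot0 p w : gdot lam p 0 w = 0.
Proof. by rewrite /gdot !mul0mx mxE. Qed.

Lemma gdot_T p W w :
  gdot lam p (2^-1 *: (W *m (invmx (gmx lam p))^T)) w = 2^-1 * \sum_r W ord0 r * w ord0 r.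
Proof.
rewrite gdotZ /gdot -(mulmxA W) invG_G mulmx1 mxE; congr (_ * _).
by apply: eq_bigr => r _; rewrite mxE.
Qed.

Lemma gdot_u1 p w : gdot lam p (ucoord R n 1) w = coord_at w 0.
Proof.
have h0 : (0 < n)%N by apply: leq_trans hn.
rewrite /gdot.
have -> : ucoord R n 1 *m gmx lam p = ucoord R n 0.
  apply/matrixP => i l; rewrite !mxE.
  under eq_bigr => m _ do rewrite !mxE gcoef_sym mulrC.
  rewrite (rowG p (fun m => if m == 1%N then 1 else 0)) //=.
  case: ifP => _; first by rewrite mulr0 add0r.
  by case: (_ == 1%N).
rewrite mxE; under eq_bigr => m _ do rewrite !mxE -coord_ord mulrC -mulrb mulr_natr mulrb.
by rewrite sum_delta h0.
Qed.

Lemma conn_val X a b p : (a < b)%N -> (b < n)%N ->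
  conn_coef lam X a b p =
  if (a <= 1)%N then - (2^-1 * coord_at X 0 * dq p (ucoord R n b)) else 0.
Proof.
move=> hab hb.
rewrite /conn_coef lc_split gdotD gdot_T.
have -> : \sum_r Wrow X (frame lam a p) p ord0 r * frame lam b p ord0 r =
  dq p X * coord_at (frame lam a p) 0 * coord_at (frame lam b p) 0
  + coord_at X 0 * dq p (frame lam a p) * coord_at (frame lam b p) 0
  - coord_at X 0 * coord_at (frame lam a p) 0 * dq p (frame lam b p).
  rewrite -Wsum; apply: eq_bigr => r _; by rewrite mxE.
rewrite !coord_frame0 !dq_frame.
case: ifP => ha.
  by rewrite Dt_lo // gdotZ gdot_u1 coord_frame0 dq_u01 //; ring.
rewrite Dt_hi ?gdot0; last by rewrite ltnNge ha.
have -> : (b <= 1)%N = false.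
  apply/negbTE; rewrite -ltnNge; apply: leq_ltn_trans _ hab.
  by apply: ltnW; rewrite ltnNge ha.
ring.
Qed.

End An.

Unset Implicit Arguments.
Set Strict Implicit.
End MB.
Import MB.

Module MC.
Local Open Scope ring_scope.
Local Open Scope classical_set_scope.

Lemma sum_delta_gen (V : zmodType) m (F : nat -> V) c :
  \sum_(r < m) (if (r : nat) == c then F r else 0) = if (c < m)%N then F c else 0.
Proof. by rewrite -big_mkcond big_ord1_eq. Qed.

Lemma sum_first2 (V : zmodType) m (G : 'I_m -> V) (i0 i1 : 'I_m) :
  val i0 = 0%N -> val i1 = 1%N -> (forall a : 'I_m, (2 <= a)%N -> G a = 0) ->
  \sum_a G a = G i0 + G i1.
Proof.
move=> e0 e1 H.
have n01 : i1 != i0 by rewrite -val_eqE /= e0 e1.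
rewrite (bigD1 i0) //= (bigD1 i1) //= big1 ?addr0 // => a /andP [a1 a0].
apply: H; move: a1 a0; rewrite -!val_eqE /= e0 e1.
by case: (val a) => [|[|k]].
Qed.

Section Sp.
Variables (R : realType) (n : nat) (lam : 'I_(n - 2) -> R)
    (E : nat -> 'M[R[i]]_(spin_dim n)).
Hypothesis hn : (2 < n)%N.
Hypothesis hE : clifford_rep E.
Local Notation pt := 'rV[R]_n.
Local Notation N := (spin_dim n).

Definition Sterm (X p : pt) (psi : 'cV[R[i]]_N) : 'cV[R[i]]_N :=
  \sum_(a < n) \sum_(b < n | (a < b)%N)
     ((2^-1 * eps R a * eps R b * conn_coef lam X a b p)%:C)%C
       *: (E a *m E b *m psi).

Definition Mb (b : nat) (psi : 'cV[R[i]]_N) := (E 1 - E 0) *m E b *m psi.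

Lemma S_formula X p psi :
  Sterm X p psi = ((- (2^-1 * 2^-1 * coord_at X 0))%:C)%C *:
     \sum_(b < n) ((dq lam p (ucoord R n b))%:C)%C *: Mb b psi.
Proof.
have h0 : (0 < n)%N by apply: leq_trans hn.
have h1 : (1 < n)%N by apply: leq_trans hn.
rewrite /Sterm.
under eq_bigr => a _ do under eq_bigr => b hab do rewrite (conn_val lam hn) //.
rewrite (@sum_first2 _ _ _ (Ordinal h0) (Ordinal h1)) //=; last first.
  move=> a ha; rewrite big1 // => b _.
  by case: a ha => [[|[|a]]] //= _ _; rewrite mulr0 rmorph0 scale0r.
rewrite [X in X + _]big_mkcond [X in _ + X]big_mkcond scaler_sumr -big_split /=; apply: eq_bigr => b _.
case: (leqP b 1) => hb.
  rewrite dq_u01 // !(mulr0, oppr0, rmorph0, scale0r, scaler0).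
  by rewrite if_same addr0.
have hb0 : (0 < b)%N by apply: ltn_trans hb.
rewrite hb0 /eps /= (negbTE (lt0n_neq0 hb0)).
rewrite /Mb !mulmxBl scalerA -rmorphM scalerBr addrC; congr (_ + _).
  by congr (_ *: _); congr (_%:C)%C; ring.
by rewrite -scaleNr -rmorphN; congr (_ *: _); congr (_%:C)%C; ring.
Qed.

Lemma Mb_zero b psi : (E 1 - E 0) *m psi = 0 -> (b < n)%N -> (2 <= b)%N -> Mb b psi = 0.
Proof.
move=> hpsi hb hb2.
have h0 : (0 < n)%N by apply: leq_trans hn.
have h1 : (1 < n)%N by apply: leq_trans hn.
have b0 : b != 0%N by move: hb2; case: (b).
have b1 : b != 1%N by move: hb2; case: (b) => [|[|k]].
rewrite /Mb mulmxBl (@cl_anti R n E hE 1 b h1 hb) ?(eq_sym 1%N) //.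
rewrite (@cl_anti R n E hE 0 b h0 hb) ?(eq_sym 0%N) //.
rewrite opprK addrC -mulmxBr -opprB mulmxN mulNmx -mulmxA hpsi mulmx0.
by rewrite oppr0.
Qed.

Lemma S_zero X p psi : (E 1 - E 0) *m psi = 0 -> Sterm X p psi = 0.
Proof.
move=> hpsi; rewrite S_formula big1 ?scaler0 // => b _.
case: (leqP b 1) => hb.
  by rewrite dq_u01 // rmorph0 scale0r.
by rewrite Mb_zero // scaler0.
Qed.

Lemma S_X0 X p psi : coord_at X 0 = 0 -> Sterm X p psi = 0.
Proof. by move=> h; rewrite S_formula h mulr0 oppr0 rmorph0 scale0r. Qed.

Lemma Mb2_inv psi : (E 1 - E 0) *m psi = E 2 *m Mb 2 psi.
Proof.
have h0 : (0 < n)%N by apply: leq_trans hn.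
have h1 : (1 < n)%N by apply: leq_trans hn.
rewrite /Mb [(E 1 - E 0) *m E 2]mulmxBl (@cl_anti R n E hE 1 2 h1 hn) //.
rewrite (@cl_anti R n E hE 0 2 h0 hn) //.
rewrite opprK [- _ + _]addrC -mulmxBr -opprB !mulmxA.
by rewrite (@cl_sqS R n E hE 2 hn) // !mulNmx mul1mx.
Qed.

End Sp.

Unset Implicit Arguments.
Set Strict Implicit.
End MC.
Import MC.

Module MD.
Local Open Scope ring_scope.
Local Open Scope classical_set_scope.

Section Line.
Variables (R : realType) (n : nat).
Local Notation pt := 'rV[R]_n.

Lemma derive_congr (f g : pt -> R) p q v :
  (forall h : R, f (h *: v + p) = g (h *: v + q)) -> f p = g q ->
  'D_v f p = 'D_v g q.
Proof.
move=> H1 H2.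
have E : (fun h : R => h^-1 *: ((f \o shift p) (h *: v) - f p)) =
         (fun h : R => h^-1 *: ((g \o shift q) (h *: v) - g q)).
  by apply/funext => h; rewrite /= H1 H2.
by rewrite /derive E.
Qed.

Lemma line_const (h : pt -> R) (X : pt) :
  (forall q, differentiable h q) -> (forall q, 'D_X h q = 0) ->
  forall p, h (p + X) = h p.
Proof.
move=> hd hD p.
pose g := fun t : R => h (t *: X + p).
have E t : (fun s : R => s^-1 *: ((g \o shift t) (s *: 1) - g t)) =
   (fun s : R => s^-1 *: ((h \o shift (t *: X + p)) (s *: X) - h (t *: X + p))).
  apply/funext => s; rewrite /g /= -[s *: 1]/(s * 1) mulr1 scalerDl addrA.
  by [].
have Hg (t : R) : is_derive t (1 : R) g 0.
  split.
    by move: (@diff_derivable _ _ _ h (t *: X + p) X (hd (t *: X + p))); rewrite /derivable -(E t).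
  by rewrite /derive E -/(derive h (t *: X + p) X) hD.
have := is_derive_0_is_cst 1 0 Hg.
by rewrite /g scale1r scale0r add0r addrC.
Qed.

End Line.

Unset Implicit Arguments.
Set Strict Implicit.
End MD.
Import MD.

Module ME.
Local Open Scope ring_scope.
Local Open Scope classical_set_scope.

Section Main.
Variables (R : realType) (n : nat).
Local Notation pt := 'rV[R]_n.
Local Notation N := (spin_dim n).

Lemma cplx0 (a b : R) : ((a%:C)%C + 'i%C * (b%:C)%C = 0 :> R[i]) -> a = 0 /\ b = 0.
Proof.
move/eqP; rewrite eq_complex /= => /andP [/eqP h1 /eqP h2].
split; lra.
Qed.

Lemma cplx_eq (z w : R[i]) : cRe z = cRe w -> cIm z = cIm w -> z = w.
Proof. by case: z => a b; case: w => c d /= -> ->. Qed.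

Lemma dir_eq0 {X} {phi : pt -> 'cV[R[i]]_N} {p} : spinor_dir X phi p = 0 ->
  forall r, 'D_X (fun q => cRe (phi q r ord0)) p = 0 /\ 'D_X (fun q => cIm (phi q r ord0)) p = 0.
Proof.
move/matrixP => H r; have := H r ord0; rewrite !mxE; exact: cplx0.
Qed.

Lemma const_line (phi : pt -> 'cV[R[i]]_N) X : smooth_spinor phi ->
  (forall q, spinor_dir X phi q = 0) -> forall p, phi (p + X) = phi p.
Proof.
move=> sm hd p; apply/matrixP => r c; rewrite [c]ord1.
have [sRe sIm] := sm r.
apply: cplx_eq.
  apply: (@line_const R n (fun q => cRe (phi q r ord0))) => [q|q].
    exact: (sRe [::] q).
  by case: (dir_eq0 (hd q) r).
apply: (@line_const R n (fun q => cIm (phi q r ord0))) => [q|q].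
  exact: (sIm [::] q).
by case: (dir_eq0 (hd q) r).
Qed.

Lemma dir_congr (phi : pt -> 'cV[R[i]]_N) X p q :
  (forall h : R, phi (h *: X + p) = phi (h *: X + q)) -> phi p = phi q ->
  spinor_dir X phi p = spinor_dir X phi q.
Proof.
move=> H1 H2; apply/matrixP => r c; rewrite !mxE.
have e1 : 'D_X (fun q' => cRe (phi q' r ord0)) p = 'D_X (fun q' => cRe (phi q' r ord0)) q.
  by apply: derive_congr => [h|]; rewrite ?H1 ?H2.
have e2 : 'D_X (fun q' => cIm (phi q' r ord0)) p = 'D_X (fun q' => cIm (phi q' r ord0)) q.
  by apply: derive_congr => [h|]; rewrite ?H1 ?H2.
by rewrite e1 e2.
Qed.

Lemma dir_cst (v : 'cV[R[i]]_N) X p : spinor_dir X (fun _ => v) p = 0.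
Proof.
apply/matrixP => r c; rewrite !mxE.
have -> : 'D_X (fun _ : pt => cRe (v r ord0)) p = 0 by exact: derive_cst.
have -> : 'D_X (fun _ : pt => cIm (v r ord0)) p = 0 by exact: derive_cst.
by rewrite rmorph0 mulr0 addr0.
Qed.

Lemma sum_at0 (V : zmodType) m (G : 'I_m -> V) (j0 : 'I_m) : val j0 = 0%N ->
  \sum_(j < m) (if val j == 0%N then G j else 0) = G j0.
Proof.
move=> e0; rewrite -big_mkcond (big_pred1 j0) // => j.
by rewrite /= -e0 val_eqE.
Qed.

Variable lam : 'I_(n - 2) -> R.

Lemma dq_p0 (p : pt) b : dq lam (coord_at p 0 *: ucoord R n 0) (ucoord R n b) = 0.
Proof.
by rewrite /dq big1 // => j _; rewrite coordZ coord_ucoord /= andbF mulr0 mulr0 mul0r mulr0.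
Qed.

Lemma dq_q (hn : (2 < n)%N) (j0 : 'I_(n - 2)) (F : nat -> 'cV[R[i]]_N) (p : pt) :
  val j0 = 0%N ->
  \sum_(b < n) ((dq lam (coord_at p 0 *: ucoord R n 0 + ucoord R n 2) (ucoord R n b))%:C)%C *: F b =
    ((2 * lam j0)%:C)%C *: F 2.
Proof.
move=> e0.
have Hd b : dq lam (coord_at p 0 *: ucoord R n 0 + ucoord R n 2) (ucoord R n b) =
            if b == 2%N then 2 * lam j0 else 0.
  rewrite /dq.
  transitivity (\sum_(j < n - 2) (if val j == 0%N then lam j * (2 * coord_at (ucoord R n b) 2) else 0)).
    apply: eq_bigr => j _.
    have hj : (j.+2 < n)%N by have := ltn_ord j; lia.
    rewrite coordD coordZ !coord_ucoord hj /= mulr0 add0r hn /=.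
    rewrite (_ : (j.+2 == 2%N) = (val j == 0%N)) //; case: (val j =P 0%N) => [->|_] /=; by rewrite ?(mulr1, mul0r, mulr0).
  rewrite (@sum_at0 _ _ _ j0 e0) coord_ucoord hn /= eq_sym.
  by case: (b == 2%N); rewrite ?mulr1 ?mulr0 // mulrC.
under eq_bigr => b _ do rewrite Hd (fun_if (fun x => (x%:C)%C)) rmorph0 (fun_if (fun c => c *: F b)) scale0r.
by rewrite (@sum_delta_gen _ _ (fun r => ((2 * lam j0)%:C)%C *: F r)) hn.
Qed.

End Main.

Unset Implicit Arguments.
Set Strict Implicit.
End ME.
Import ME.

Theorem proposition5 (R : realType) (n : nat) (lam : 'I_(n - 2) -> R)
    (E : nat -> 'M[R[i]]_(spin_dim n))
    (hn : (3 <= n)%N) (hlam : forall j, lam j != 0)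
    (hE : clifford_rep E) :
  (forall phi : 'rV[R]_n -> 'cV[R[i]]_(spin_dim n),
     smooth_spinor phi ->
     (parallel_spinor lam E phi <->
      exists v : 'cV[R[i]]_(spin_dim n),
        (E 1%N - E 0%N) *m v = 0 /\ forall p, phi p = v)) /\
  \rank (kermx (E 1%N - E 0%N)^T) = (spin_dim n %/ 2)%N.
Proof.
have h0 : (0 < n)%N by apply: leq_trans hn.
have h1 : (1 < n)%N by apply: leq_trans hn.
split; last exact: (@rank_ker R n E hE h1).
move=> phi sm.
have nab p X : spinor_nabla lam E X phi p =
   spinor_dir X phi p + Sterm R n lam E X p (phi p) by [].
split.
- move=> par.
  have par' p X : spinor_dir X phi p = - Sterm R n lam E X p (phi p).
    by apply/eqP; rewrite -addr_eq0 -nab; apply/eqP; exact: par.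
  have step1 p X : coord_at X 0 = 0 -> phi (p + X) = phi p.
    move=> hX; apply: (@const_line R n phi X sm) => q.
    by rewrite par' (@S_X0 R n lam E hn) ?oppr0.
  have step2 p : (E 1%N - E 0%N) *m phi p = 0.
    pose p0 := coord_at p 0 *: ucoord R n 0.
    have -> : phi p = phi p0.
      have := step1 p0 (p - p0); rewrite [p0 + _]addrC subrK; apply.
      by rewrite coordB coordZ coord_ucoord h0 /= mulr1 subrr.
    pose q := p0 + ucoord R n 2.
    have cu2 : coord_at (ucoord R n 2) 0 = 0 by rewrite coord_ucoord andbF.
    have eq_q : phi q = phi p0 := step1 p0 _ cu2.
    have hdir : spinor_dir (ucoord R n 0) phi q = spinor_dir (ucoord R n 0) phi p0.
      by apply: dir_congr => // h; rewrite /q addrA step1.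
    have hn2 : (0 < n - 2)%N by rewrite subn_gt0.
    pose j0 : 'I_(n - 2) := Ordinal hn2.
    move: hdir; rewrite !par' eq_q => /oppr_inj.
    rewrite !(@S_formula R n lam E hn) coord_ucoord h0 /= mulr1.
    rewrite (@dq_q R n lam hn j0 (fun b => @Mb R n E b (phi p0)) p) //.
    under eq_bigr => b _ do rewrite dq_p0 rmorph0 scale0r.
    rewrite big1_eq scaler0 scalerA -rmorphM => /eqP.
    rewrite scalemx_eq0 => /orP [/eqP|/eqP hM].
      move/(congr1 (fun z => cRe z)) => /=.
      move=> /eqP; rewrite mulf_eq0 oppr_eq0 !mulf_eq0 invr_eq0 pnatr_eq0 /=.
      by rewrite (negbTE (hlam j0)).
    by rewrite (@Mb2_inv R n E hn hE) hM mulmx0.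
  have step3 p X : spinor_dir X phi p = 0.
    by rewrite par' (@S_zero R n lam E hn hE) ?oppr0 // step2.
  exists (phi 0); split; first exact: step2.
  move=> p; have := @const_line R n phi p sm (fun q => step3 q p) 0.
  by rewrite add0r.
- case=> v [hv hphi] p X.
  have -> : phi = (fun _ => v) by apply/funext.
  rewrite /spinor_nabla dir_cst add0r.
  exact: (@S_zero R n lam E hn hE X p v hv).
Qed.
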